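(* Let $A$ be a $K$-algebra and $n\ge1$. (1) The algebra $\mathbb{S}_n\otimes_K A$ is prime iff $A$ is prime. (2) An ideal $\mathfrak p$ of $A$ is prime iff the ideal $\mathbb{S}_n\otimes\mathfrak p$ of $\mathbb{S}_n\otimes A$ is prime.
   Context: $K$ is a field. $\mathbb{S}_n$ is the $K$-algebra generated by $x_1,\dots,x_n,y_1,\dots,y_n$ subject to the defining relations $y_ix_i=1$ for all $i$, and $[x_i,y_j]=[x_i,x_j]=[y_i,y_j]=0$ for all $i\ne j$. *)

(* Defs.v *)
From HB Require Import structures.
From mathcomp Require Import all_boot all_order all_algebra.
Set Implicit Arguments. Unset Strict Implicit. Unset Printing Implicit Defensive.
Import GRing.Theory.
Local Open Scope ring_scope.

Section Defs.
Variable K : fieldType.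

Definition alg_morph (A B : algType K) (f : A -> B) : Prop :=
  f 1 = 1 /\ (forall a b, f (a * b) = f a * f b) /\
  (forall (k : K) a b, f (k *: a + b) = k *: f a + f b).

Definition klinear (U V : lmodType K) (f : U -> V) : Prop :=
  forall (k : K) u v, f (k *: u + v) = k *: f u + f v.

Definition Sn_relations (n : nat) (B : algType K) (x y : 'I_n -> B) : Prop :=
  (forall i, y i * x i = 1) /\
  (forall i j, i != j ->
     [/\ x i * y j = y j * x i, x i * x j = x j * x i & y i * y j = y j * y i]).

(* (S, x, y) is THE algebra S_n generated by x_1..x_n, y_1..y_n subject to
   the defining relations: universal property of the presentation. *)
Definition is_Sn (n : nat) (S : algType K) (x y : 'I_n -> S) : Prop :=
  Sn_relations x y /\
  forall (B : algType K) (xb yb : 'I_n -> B), Sn_relations xb yb ->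
    exists f : S -> B,
      [/\ alg_morph f, (forall i, f (x i) = xb i /\ f (y i) = yb i) &
          forall g : S -> B, alg_morph g ->
            (forall i, g (x i) = xb i /\ g (y i) = yb i) -> forall s, g s = f s].

Definition bilinear_map (S A : algType K) (V : lmodType K) (f : S -> A -> V) : Prop :=
  (forall a, klinear (fun s : S => f s a)) /\ (forall s, klinear (f s)).

(* (T, iS, iA) is the tensor product algebra S (x)_K A, with
   iS s * iA a playing the role of s (x) a:  T is the tensor product of the
   underlying vector spaces (universal bilinear property) and the algebra
   structure is (s (x) a)(s' (x) a') = ss' (x) aa'. *)
Definition is_tensor_alg (S A T : algType K) (iS : S -> T) (iA : A -> T) : Prop :=
  [/\ alg_morph iS, alg_morph iA,
      (forall s a, iS s * iA a = iA a * iS s) &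
      forall (V : lmodType K) (f : S -> A -> V), bilinear_map f ->
        exists g : T -> V,
          [/\ klinear g, (forall s a, g (iS s * iA a) = f s a) &
              forall g' : T -> V, klinear g' ->
                (forall s a, g' (iS s * iA a) = f s a) -> forall t, g' t = g t]].

Definition is_ideal (R : nzRingType) (I : R -> Prop) : Prop :=
  [/\ I 0, (forall a b, I a -> I b -> I (a + b)) &
      (forall r a, I a -> I (r * a) /\ I (a * r))].

Definition ideal_prod (R : nzRingType) (I J : R -> Prop) : R -> Prop :=
  fun t => exists s : seq (R * R),
    (forall p, p \in s -> I p.1 /\ J p.2) /\ t = \sum_(p <- s) p.1 * p.2.

Definition subpred (R : Type) (I J : R -> Prop) : Prop := forall r, I r -> J r.

Definition prime_ideal (R : nzRingType) (P : R -> Prop) : Prop :=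
  [/\ is_ideal P, ~ (forall r, P r) &
      forall I J : R -> Prop, is_ideal I -> is_ideal J ->
        subpred (ideal_prod I J) P -> subpred I P \/ subpred J P].

Definition prime_ring (R : nzRingType) : Prop := prime_ideal (fun r : R => r = 0).

(* The ideal S (x) p of S (x) A: the image of S (x)_K p, i.e. the set of
   finite sums of s (x) a with a in p. *)
Definition tensor_ideal (S A T : algType K) (iS : S -> T) (iA : A -> T)
    (p : A -> Prop) : T -> Prop :=
  fun t => exists l : seq (S * A),
    (forall q, q \in l -> p q.2) /\ t = \sum_(q <- l) iS q.1 * iA q.2.

End Defs.

(* Main.v *)
Require Import Defs.
From HB Require Import structures.
From mathcomp Require Import all_boot all_order all_algebra.
From Stdlib Require Import Classical ClassicalEpsilon FunctionalExtensionality PropExtensionality ProofIrrelevance Lia.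
Set Implicit Arguments. Unset Strict Implicit. Unset Printing Implicit Defensive.
Import GRing.Theory.
Local Open Scope ring_scope.

Lemma pdec (P : Prop) : {P} + {~ P}.
Proof.
have /constructive_indefinite_description [b Hb] : exists b : bool, (b = true <-> P).
  case: (classic P) => H; [by exists true | exists false; split => //].
by case: b Hb => Hb; [left; apply/Hb | right => /Hb].
Qed.
Definition pbool (P : Prop) : bool := if pdec P then true else false.
Lemma pboolP (P : Prop) : reflect P (pbool P).
Proof. by rewrite /pbool; case: pdec => H; constructor. Qed.

Section SubInd.
Variable K : fieldType.
Variable S : algType K.
Variable Q : S -> Prop.
Hypotheses (Q1 : Q 1) (Q0 : Q 0) (QD : forall u v, Q u -> Q v -> Q (u + v))
  (QZ : forall k u, Q u -> Q (k *: u)) (QM : forall u v, Q u -> Q v -> Q (u * v)).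
Definition Qb : pred S := fun s => pbool (Q s).
Lemma Qb_closed : GRing.subsemialg_closed Qb.
Proof.
split; rewrite ?unfold_in /Qb.
- by apply/pboolP.
- split; first by rewrite unfold_in; apply/pboolP.
  by move=> u v; rewrite !unfold_in => /pboolP ? /pboolP ?; apply/pboolP; auto.
- by move=> k u; rewrite !unfold_in => /pboolP ?; apply/pboolP; auto.
- by move=> u v; rewrite !unfold_in => /pboolP ? /pboolP ?; apply/pboolP; auto.
Qed.
Definition Dsub (H : GRing.subsemialg_closed Qb) := {s : S | Qb s}.
Variable H : GRing.subsemialg_closed Qb.
HB.instance Definition _ := [isSub of Dsub H for @sval S Qb].
HB.instance Definition _ := [Choice of Dsub H by <:].
HB.instance Definition _ := GRing.SubChoice_isSubAlgebra.Build K S Qb (Dsub H) H.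
End SubInd.

Lemma Sn_ind (K : fieldType) (n : nat) (S : algType K) (x y : 'I_n -> S) (hS : is_Sn x y)
  (Q : S -> Prop) (Q1 : Q 1) (Q0 : Q 0) (QD : forall u v, Q u -> Q v -> Q (u + v))
  (QZ : forall k u, Q u -> Q (k *: u)) (QM : forall u v, Q u -> Q v -> Q (u * v))
  (Qx : forall i, Q (x i)) (Qy : forall i, Q (y i)) : forall s, Q s.
Proof.
pose D := Dsub (Qb_closed Q1 Q0 QD QZ QM).
have Qbx i : Qb Q (x i) by apply/pboolP.
have Qby i : Qb Q (y i) by apply/pboolP.
pose xd i : D := exist _ (x i) (Qbx i).
pose yd i : D := exist _ (y i) (Qby i).
case: hS => [[hr1 hr2] hU].
have rel : Sn_relations xd yd.
  split.
    by move=> i; apply: val_inj; rewrite /= hr1.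
  move=> i j /hr2 [h1 h2 h3]; split; apply: val_inj => /=; by [rewrite h1|rewrite h2|rewrite h3].
have [f [fm fgen _]] := hU D xd yd rel.
have [f0 [f0m f0gen f0u]] := hU S x y (conj hr1 hr2).
have vm : alg_morph (fun s : S => val (f s)).
  case: fm => [f1 [fM fL]]; split; first by rewrite f1.
  split; first by move=> a b; rewrite fM.
  by move=> k a b; rewrite fL.
have idm : alg_morph (fun s : S => s) by [].
move=> s.
have e1 := f0u _ vm (fun i => let: conj a b := fgen i in conj (f_equal val a) (f_equal val b)) s.
have e2 := f0u _ idm (fun i => conj erefl erefl) s.
rewrite /= in e1 e2.
have h : Qb Q (sval (f s)) := valP (f s).
rewrite e1 -e2 in h; exact/pboolP.
Qed.
Section SubModInd.
Variable K : fieldType.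
Variable V : lmodType K.
Variable Q : V -> Prop.
Definition Qm : pred V := fun s => pbool (Q s).
Lemma Qm_closed (Q0 : Q 0) (QD : forall u v, Q u -> Q v -> Q (u + v))
  (QZ : forall k u, Q u -> Q (k *: u)) : GRing.subsemimod_closed Qm.
Proof.
split; rewrite ?unfold_in /Qm.
- split; first by rewrite unfold_in; apply/pboolP.
  by move=> u v; rewrite !unfold_in => /pboolP ? /pboolP ?; apply/pboolP; auto.
- by move=> k u; rewrite !unfold_in => /pboolP ?; apply/pboolP; auto.
Qed.
Definition Msub (H : GRing.subsemimod_closed Qm) := {s : V | Qm s}.
Variable H : GRing.subsemimod_closed Qm.
HB.instance Definition _ := [isSub of Msub H for @sval V Qm].
HB.instance Definition _ := [Choice of Msub H by <:].
HB.instance Definition _ := GRing.SubChoice_isSubLmodule.Build K V Qm (Msub H) H.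
End SubModInd.

Lemma tensor_ind (K : fieldType) (S A T : algType K) (iS : S -> T) (iA : A -> T)
  (hT : is_tensor_alg iS iA) (Q : T -> Prop) (Q0 : Q 0) (QD : forall u v, Q u -> Q v -> Q (u + v))
  (QZ : forall k u, Q u -> Q (k *: u)) (Qt : forall s a, Q (iS s * iA a)) : forall t, Q t.
Proof.
pose H := Qm_closed Q0 QD QZ.
pose W := Msub H.
have Qt' s a : Qm Q (iS s * iA a) by apply/pboolP.
pose f (s : S) (a : A) : W := exist _ (iS s * iA a) (Qt' s a).
case: hT => [[_ [_ hSl]] [_ [_ hAl]] _ hU].
have bf : bilinear_map f.
  split=> [a|s] k u v; apply: val_inj => /=.
    by rewrite hSl mulrDl scalerAl.
  by rewrite hAl mulrDr scalerAr.
have [g [gl gv _]] := hU W f bf.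
have bf0 : bilinear_map (fun (s : S) (a : A) => iS s * iA a).
  split=> [a|s] k u v /=.
    by rewrite hSl mulrDl scalerAl.
  by rewrite hAl mulrDr scalerAr.
have [g0 [g0l g0v g0u]] := hU T _ bf0.
move=> t.
have e1 : val (g t) = g0 t.
  apply: (g0u (fun t => val (g t))) => [k u v|s a] /=; first by rewrite gl.
  by rewrite gv.
have e2 : t = g0 t by apply: (g0u (fun t => t)).
have h : Qm Q (sval (g t)) := valP (g t).
by rewrite /= e1 -e2 in h; apply/pboolP.
Qed.
Section Classical.
Variable T : Type.
Definition cl := T.
Definition cl_eq (a b : cl) : bool := pbool (a = b).
Lemma cl_eqP : Equality.axiom cl_eq.
Proof. move=> a b; exact: pboolP. Qed.
HB.instance Definition _ := hasDecEq.Build cl cl_eqP.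
Definition cl_find (P : pred cl) (k : nat) : option cl :=
  match pdec (exists x, P x) with
  | left h => Some (proj1_sig (constructive_indefinite_description _ h))
  | right _ => None end.
Lemma cl_find_correct P k x : cl_find P k = Some x -> P x.
Proof.
rewrite /cl_find; case: pdec => // h [<-].
exact: (proj2_sig (constructive_indefinite_description _ h)).
Qed.
Lemma cl_find_complete (P : pred cl) : (exists x, P x) -> exists k, cl_find P k.
Proof. by move=> h; exists 0%N; rewrite /cl_find; case: pdec. Qed.
Lemma cl_find_ext (P Q : pred cl) : P =1 Q -> cl_find P =1 cl_find Q.
Proof.
move=> h; have -> : P = Q by apply: functional_extensionality => z; exact: h.
by [].
Qed.
HB.instance Definition _ := hasChoice.Build cl cl_find_correct cl_find_complete cl_find_ext.
End Classical.

Section Model.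
Variable K : fieldType.
Variable n : nat.
Definition M := {ffun 'I_n -> nat}.
Definition lin (f : (M -> K) -> (M -> K)) : Prop :=
  forall k u v g, f (fun g => k * u g + v g) g = k * f u g + f v g.
Definition Ety := cl {f : (M -> K) -> (M -> K) | lin f}.
HB.instance Definition _ := Choice.copy Ety (cl {f : (M -> K) -> (M -> K) | lin f}).
Definition Eapp (f : Ety) := proj1_sig f.
Lemma Eext (f g : Ety) : (forall v z, Eapp f v z = Eapp g v z) -> f = g.
Proof.
case: f g => f hf [g hg] /= h.
have e : f = g by apply: functional_extensionality => v; apply: functional_extensionality => z; exact: h.
subst g; congr exist; exact: proof_irrelevance.
Qed.
Lemma linE (f : Ety) k u v g : Eapp f (fun g => k * u g + v g) g = k * Eapp f u g + Eapp f v g.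
Proof. by case: f => f hf; apply: hf. Qed.
Lemma lin_ext (f : Ety) u v : (forall g, u g = v g) -> forall g, Eapp f u g = Eapp f v g.
Proof. by move=> h g; have -> : u = v by apply: functional_extensionality. Qed.
Lemma Eapp0 (f : Ety) g : Eapp f (fun _ => 0) g = 0.
Proof.
have h := linE f 1 (fun _ => 0) (fun _ => 0) g.
rewrite (@lin_ext f (fun g => 1 * 0 + 0) (fun _ => 0)) in h; last by move=> z; rewrite mulr0 addr0.
by move/eqP: h; rewrite mul1r eq_sym -subr_eq0 addrK => /eqP.
Qed.
Lemma EappD (f : Ety) u v g : Eapp f (fun g => u g + v g) g = Eapp f u g + Eapp f v g.
Proof. by rewrite -[in RHS](mul1r (Eapp f u g)) -linE; apply: lin_ext => z; rewrite mul1r. Qed.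
Lemma EappZ (f : Ety) k u g : Eapp f (fun g => k * u g) g = k * Eapp f u g.
Proof.
by rewrite -[RHS]addr0 -(Eapp0 f g) -linE; apply: lin_ext => z; rewrite addr0.
Qed.
Lemma EappN (f : Ety) u g : Eapp f (fun g => - u g) g = - Eapp f u g.
Proof. by rewrite -mulN1r -EappZ; apply: lin_ext => z; rewrite mulN1r. Qed.

Definition mkE (f : (M -> K) -> (M -> K)) (h : lin f) : Ety := exist _ f h.
Lemma lin0 : lin (fun _ _ => 0). Proof. by move=> *; rewrite mulr0 addr0. Qed.
Lemma linD (f g : Ety) : lin (fun v z => Eapp f v z + Eapp g v z).
Proof. by move=> k u v z; rewrite !linE mulrDr addrACA. Qed.
Lemma linN (f : Ety) : lin (fun v z => - Eapp f v z).
Proof. by move=> k u v z; rewrite linE opprD mulrN. Qed.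
Lemma lin1 : lin (fun v => v). Proof. by []. Qed.
Lemma linM (f g : Ety) : lin (fun v => Eapp f (Eapp g v)).
Proof.
move=> k u v z.
rewrite (lin_ext f (v := fun z => k * Eapp g u z + Eapp g v z)); last by move=> w; rewrite linE.
by rewrite linE.
Qed.
Lemma linZ (c : K) (f : Ety) : lin (fun v z => c * Eapp f v z).
Proof. by move=> k u v z; rewrite linE mulrDr mulrCA. Qed.

Definition E0 : Ety := mkE lin0.
Definition EaddF (f g : Ety) : Ety := mkE (linD f g).
Definition EoppF (f : Ety) : Ety := mkE (linN f).
Definition E1 : Ety := mkE lin1.
Definition EmulF (f g : Ety) : Ety := mkE (linM f g).
Definition EscaleF (c : K) (f : Ety) : Ety := mkE (linZ c f).

Lemma EaddA : associative EaddF. Proof. by move=> *; apply: Eext => * /=; rewrite addrA. Qed.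
Lemma EaddC : commutative EaddF. Proof. by move=> *; apply: Eext => * /=; rewrite addrC. Qed.
Lemma Eadd0 : left_id E0 EaddF. Proof. by move=> *; apply: Eext => * /=; rewrite add0r. Qed.
Lemma EaddN : left_inverse E0 EoppF EaddF. Proof. by move=> *; apply: Eext => * /=; rewrite addNr. Qed.
HB.instance Definition _ := GRing.isZmodule.Build Ety EaddA EaddC Eadd0 EaddN.

Lemma EmulA : associative EmulF. Proof. by move=> *; apply: Eext. Qed.
Lemma Emul1 : left_id E1 EmulF. Proof. by move=> *; apply: Eext. Qed.
Lemma Emulr1 : right_id E1 EmulF. Proof. by move=> *; apply: Eext. Qed.
Lemma EmulDl : left_distributive EmulF +%R. Proof. by move=> *; apply: Eext. Qed.
Lemma EmulDr : right_distributive EmulF +%R.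
Proof. by move=> f g h; apply: Eext => v z /=; rewrite EappD. Qed.
Definition m0 : M := [ffun => 0%N].
Lemma Eone_neq0 : E1 != 0.
Proof.
apply/eqP => /(f_equal (fun f : Ety => Eapp f (fun _ => 1) m0)) /= /eqP.
by rewrite oner_eq0.
Qed.
HB.instance Definition _ := GRing.Zmodule_isNzRing.Build Ety EmulA Emul1 Emulr1 EmulDl EmulDr Eone_neq0.
Lemma EscaleA a b (f : Ety) : EscaleF a (EscaleF b f) = EscaleF (a * b) f.
Proof. by apply: Eext => * /=; rewrite mulrA. Qed.
Lemma Escale1 : left_id 1 EscaleF. Proof. by move=> *; apply: Eext => * /=; rewrite mul1r. Qed.
Lemma EscaleDr : right_distributive EscaleF +%R.
Proof. by move=> *; apply: Eext => * /=; rewrite mulrDr. Qed.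
Lemma EscaleDl f : {morph EscaleF^~ f : a b / a + b}.
Proof. by move=> *; apply: Eext => * /=; rewrite mulrDl. Qed.
HB.instance Definition _ := GRing.Zmodule_isLmodule.Build K Ety EscaleA Escale1 EscaleDr EscaleDl.
Lemma EscaleAl (a : K) (u v : Ety) : a *: (u * v) = (a *: u) * v.
Proof. by apply: Eext. Qed.
HB.instance Definition _ := GRing.Lmodule_isLalgebra.Build K Ety EscaleAl.
Lemma EscaleAr (a : K) (u v : Ety) : a *: (u * v) = u * (a *: v).
Proof. by apply: Eext => w z /=; rewrite EappZ. Qed.
HB.instance Definition _ := GRing.Lalgebra_isAlgebra.Build K Ety EscaleAr.
End Model.

Check (fun (K : fieldType) n => (Ety K n : algType K)).
Section ModelOps.
Variable K : fieldType.
Variable n : nat.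
Definition up (i : 'I_n) (g : M n) : M n := [ffun j => if j == i then (g j).+1 else g j].
Definition dn (i : 'I_n) (g : M n) : M n := [ffun j => if j == i then (g j).-1 else g j].
Lemma dn_up i (g : M n) : dn i (up i g) = g.
Proof. by apply/ffunP => j; rewrite !ffunE; case: eqP => [->|]; rewrite ?ffunE ?eqxx. Qed.
Lemma up_dn i (g : M n) : (0 < g i)%N -> up i (dn i g) = g.
Proof. by move=> h; apply/ffunP => j; rewrite !ffunE; case: eqP => [->|]; rewrite ?ffunE ?eqxx // prednK. Qed.
Lemma up_upC i j (g : M n) : up i (up j g) = up j (up i g).
Proof. by apply/ffunP => k; rewrite !ffunE; do 2 case: eqP => //. Qed.
Lemma dn_dnC i j (g : M n) : dn i (dn j g) = dn j (dn i g).
Proof. by apply/ffunP => k; rewrite !ffunE; do 2 case: eqP => //. Qed.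
Lemma up_dnC i j (g : M n) : i != j -> up i (dn j g) = dn j (up i g).
Proof. move=> /negbTE h; apply/ffunP => k; rewrite !ffunE; case: eqP => [->|]; rewrite ?h //. Qed.
Lemma upE i j (g : M n) : i != j -> up i g j = g j.
Proof. by rewrite ffunE eq_sym => /negbTE ->. Qed.
Lemma dnE i j (g : M n) : i != j -> dn i g j = g j.
Proof. by rewrite ffunE eq_sym => /negbTE ->. Qed.

Definition Xf (i : 'I_n) (v : M n -> K) (g : M n) : K := if (0 < g i)%N then v (dn i g) else 0.
Definition Yf (i : 'I_n) (v : M n -> K) (g : M n) : K := v (up i g).
Lemma linX i : lin (Xf i). Proof. by move=> k u v g; rewrite /Xf; case: ifP; rewrite ?mulr0 ?addr0. Qed.
Lemma linY i : lin (Yf i). Proof. by []. Qed.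
Definition XE i : Ety K n := mkE (linX i).
Definition YE i : Ety K n := mkE (linY i).

Lemma model_rel : Sn_relations XE YE.
Proof.
rewrite /Sn_relations; split.
  move=> i; apply: Eext => v g /=; rewrite /Yf /Xf ffunE eqxx /= dn_up //.
move=> i j hij; have hji : j != i by rewrite eq_sym.
split; apply: Eext => v g /=; rewrite /Xf /Yf.
- by rewrite (upE _ hji) (up_dnC _ hji).
- rewrite (dnE _ hij) (dnE _ hji); case: (0 < g i)%N; case: (0 < g j)%N => //.
  by rewrite dn_dnC.
- by rewrite up_upC.
Qed.

Lemma model_P_neq0 : \prod_(i < n) (1 - XE i * YE i) != 0 :> Ety K n.
Proof.
have key : forall r : seq 'I_n, Eapp (\prod_(i <- r) (1 - XE i * YE i)) (fun _ => 1) (m0 n) = 1.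
  elim=> [|i r IH]; first by rewrite big_nil.
  rewrite big_cons /= /Xf /Yf ffunE ltnn /= subr0.
  exact: IH.
apply/eqP => h; have := key (index_enum 'I_n).
rewrite -[X in Eapp X]/(\prod_(i < n) (1 - XE i * YE i)) h /= => /eqP.
by rewrite eq_sym oner_eq0.
Qed.
End ModelOps.
Section AlgMorph.
Variable K : fieldType.
Variables (A B : algType K) (f : A -> B) (hf : alg_morph f).
Lemma am0 : f 0 = 0.
Proof.
have [_ [_ hl]] := hf; have := hl 1 0 0; rewrite !scale1r !addr0 => /eqP.
by rewrite eq_sym -subr_eq0 addrK => /eqP ->.
Qed.
Lemma amD a b : f (a + b) = f a + f b.
Proof. by have [_ [_ hl]] := hf; rewrite -{1}[a]scale1r hl scale1r. Qed.
Lemma amZ k a : f (k *: a) = k *: f a.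
Proof. by have [_ [_ hl]] := hf; rewrite -[k *: a]addr0 hl am0 addr0. Qed.
Lemma amN a : f (- a) = - f a.
Proof. by rewrite -scaleN1r amZ scaleN1r. Qed.
Lemma amB a b : f (a - b) = f a - f b.
Proof. by rewrite amD amN. Qed.
Lemma am1 : f 1 = 1. Proof. by have [h _] := hf. Qed.
Lemma amM a b : f (a * b) = f a * f b. Proof. by have [_ [h _]] := hf. Qed.
Lemma am_prod (I : Type) (r : seq I) (F : I -> A) : f (\prod_(i <- r) F i) = \prod_(i <- r) f (F i).
Proof. elim: r => [|i r IH]; by rewrite ?big_nil ?am1 // !big_cons amM IH. Qed.
End AlgMorph.

Section OneVar.
Variable R : nzRingType.
Variables a b : R.
Hypothesis hba : b * a = 1.
Definition Pone := 1 - a * b.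
Lemma Pone_a : Pone * a = 0.
Proof. by rewrite /Pone mulrBl mul1r -mulrA hba mulr1 subrr. Qed.
Lemma b_Pone : b * Pone = 0.
Proof. by rewrite /Pone mulrBr mulr1 mulrA hba mul1r subrr. Qed.
Lemma Pone_idem : Pone * Pone = Pone.
Proof. by rewrite {1}/Pone mulrBl mul1r -mulrA b_Pone mulr0 subr0. Qed.
Lemma Pone_aX k : (0 < k)%N -> Pone * a ^+ k = 0.
Proof. by case: k => // k _; rewrite exprS mulrA Pone_a mul0r. Qed.
Lemma bX_Pone k : (0 < k)%N -> b ^+ k * Pone = 0.
Proof. by case: k => // k _; rewrite exprSr -mulrA b_Pone mulr0. Qed.
Lemma bXaX k m : b ^+ k * a ^+ m = if (m <= k)%N then b ^+ (k - m) else a ^+ (m - k).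
Proof.
elim: m k => [|m IH] k; first by rewrite expr0 mulr1 subn0.
case: k => [|k]; first by rewrite expr0 mul1r.
by rewrite exprSr exprS mulrA -[_ * b * a]mulrA hba mulr1 IH ltnS subSS.
Qed.
Lemma Pone_mid k c d m :
  Pone * (b ^+ k * (a ^+ c * b ^+ d) * a ^+ m) * Pone =
  if [&& (c <= k)%N, (d <= m)%N & (k - c == m - d)%N] then Pone else 0.
Proof.
have e : Pone * (b ^+ k * (a ^+ c * b ^+ d) * a ^+ m) * Pone =
   Pone * (b ^+ k * a ^+ c) * (b ^+ d * a ^+ m) * Pone by rewrite !mulrA.
rewrite e bXaX.
case: (leqP c k) => hck /=; last first.
  by rewrite (Pone_aX (k := c - k)) ?subn_gt0 // !mul0r.
have e2 : Pone * b ^+ (k - c) * (b ^+ d * a ^+ m) * Pone = Pone * (b ^+ (k - c + d) * a ^+ m) * Pone.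
  by rewrite exprD !mulrA.
rewrite e2 bXaX.
have hc : [&& (d <= m)%N & (k - c == m - d)%N] = (k - c + d == m)%N.
  move/leP: hck => h; apply/idP/idP.
    case/andP => /leP h1 /eqP h2; apply/eqP; rewrite -?plusE -?minusE in h2 *; lia.
  move/eqP => h1; apply/andP; split; [apply/leP | apply/eqP]; rewrite -?plusE -?minusE in h1 *; lia.
rewrite hc.
case: (leqP m (k - c + d)) => hm.
  case: (ltnP m (k - c + d)) => hm'.
    rewrite -mulrA (bX_Pone (k := _ - m)) ?subn_gt0 // mulr0.
    by rewrite (gtn_eqF hm').
  have -> : (k - c + d = m)%N by apply/eqP; rewrite eqn_leq hm hm'.
  by rewrite subnn expr0 mulr1 Pone_idem eqxx.
rewrite (Pone_aX (k := _ - _)) ?subn_gt0 // mul0r.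
by rewrite (ltn_eqF hm).
Qed.
End OneVar.
Section SnTheory.
Variable K : fieldType.
Variable n : nat.
Variable S : algType K.
Variables x y : 'I_n -> S.
Hypothesis hS : is_Sn x y.

Lemma relS : Sn_relations x y. Proof. by case: hS. Qed.
Lemma yx i : y i * x i = 1. Proof. by case: relS => h _; apply: h. Qed.
Lemma rel2 i j : i != j ->
  [/\ x i * y j = y j * x i, x i * x j = x j * x i & y i * y j = y j * y i].
Proof. by case: relS => _ h; apply: h. Qed.

Definition ia (j : 'I_n) (e : S) :=
  forall u, GRing.comm u (x j) -> GRing.comm u (y j) -> GRing.comm u e.
Lemma ia_x j : ia j (x j). Proof. by move=> u. Qed.
Lemma ia_y j : ia j (y j). Proof. by move=> u. Qed.
Lemma ia_1 j : ia j 1. Proof. by move=> u _ _; apply: commr1. Qed.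
Lemma ia_M j e e' : ia j e -> ia j e' -> ia j (e * e').
Proof. by move=> h h' u hx hy; apply: commrM; [apply: h | apply: h']. Qed.
Lemma ia_B j e e' : ia j e -> ia j e' -> ia j (e - e').
Proof. by move=> h h' u hx hy; apply: commrB; [apply: h | apply: h']. Qed.
Lemma ia_X j e k : ia j e -> ia j (e ^+ k).
Proof. by move=> h u hx hy; apply: commrX; apply: h. Qed.
Lemma ia_comm i j e e' : i != j -> ia i e -> ia j e' -> GRing.comm e e'.
Proof.
move=> hij he he'; have [h1 h2 h3] := rel2 hij.
have hji : j != i by rewrite eq_sym.
have [h1' h2' h3'] := rel2 hji.
apply/commr_sym; apply: he.
  by apply/commr_sym; apply: he'.
by apply/commr_sym; apply: he'; rewrite /GRing.comm; [rewrite h1' | rewrite h3].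
Qed.

Lemma prod_mul (r : seq 'I_n) (F G : 'I_n -> S) :
  uniq r -> (forall i, ia i (F i)) -> (forall i, ia i (G i)) ->
  (\prod_(i <- r) F i) * (\prod_(i <- r) G i) = \prod_(i <- r) (F i * G i).
Proof.
move=> + hF hG; elim: r => [|i r IH]; first by rewrite !big_nil mulr1.
rewrite /= => /andP [hi hu]; rewrite !big_cons -IH //.
have hc : GRing.comm (G i) (\prod_(k <- r) F k).
  rewrite big_seq; apply: commr_prod => k hk.
  apply/commr_sym; apply: (ia_comm _ (hF k) (hG i)).
  by apply: contraNneq hi => <-.
by rewrite -mulrA (mulrA _ (G i)) -hc !mulrA.
Qed.

Definition Pi (i : 'I_n) := 1 - x i * y i.
Definition P := \prod_(i < n) Pi i.
Definition mono (g d : M n) := \prod_(i < n) (x i ^+ g i * y i ^+ d i).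
Definition cu (al : M n) := \prod_(i < n) (Pi i * y i ^+ al i).
Definition cv (be : M n) := \prod_(i < n) (x i ^+ be i * Pi i).
Definition cond (al be g d : M n) :=
  all (fun i => [&& (g i <= al i)%N, (d i <= be i)%N & (al i - g i == be i - d i)%N])
      (index_enum 'I_n).

Lemma ia_Pi i : ia i (Pi i). Proof. by apply: ia_B; [apply: ia_1 | apply: ia_M; [apply: ia_x | apply: ia_y]]. Qed.
Lemma ia_xy i a b : ia i (x i ^+ a * y i ^+ b).
Proof. by apply: ia_M; apply: ia_X; [apply: ia_x | apply: ia_y]. Qed.

Lemma prod_if (r : seq 'I_n) (c : 'I_n -> bool) :
  \prod_(i <- r) (if c i then Pi i else 0) = if all c r then \prod_(i <- r) Pi i else 0.
Proof.
elim: r => [|i r IH]; first by rewrite !big_nil.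
rewrite !big_cons /= IH; case: (c i); case: (all c r); by rewrite ?mulr0 ?mul0r.
Qed.

Lemma compress_mono al be g d :
  cu al * mono g d * cv be = if cond al be g d then P else 0.
Proof.
rewrite /cu /mono /cv prod_mul ?index_enum_uniq //; last first.
  by move=> i; apply: ia_xy.
  by move=> i; apply: ia_M; [apply: ia_Pi | apply: ia_X; apply: ia_y].
rewrite prod_mul ?index_enum_uniq //; last first.
  by move=> i; apply: ia_M; [apply: ia_X; apply: ia_x | apply: ia_Pi].
  by move=> i; apply: ia_M; [apply: ia_M; [apply: ia_Pi | apply: ia_X; apply: ia_y] | apply: ia_xy].
rewrite /cond -prod_if /P; apply: eq_bigr => i _.
rewrite -(Pone_mid (yx i)) /Pone /Pi !mulrA.
by [].
Qed.

Lemma prod_single (r : seq 'I_n) j (a : S) : uniq r -> j \in r ->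
  \prod_(i <- r) (if i == j then a else 1) = a.
Proof.
elim: r => [|i r IH] //= /andP [hi hu]; rewrite inE big_cons.
case: (eqVneq i j) => [eij _|nij /= hj].
  rewrite big1_seq ?mulr1 // => k /andP [_ hk].
  by case: eqP => // ek; move: hi; rewrite eij -ek hk.
by rewrite mul1r IH.
Qed.

Lemma ia_if i j (a : S) : ia j a -> ia i (if i == j then a else 1).
Proof. by move=> h; case: eqP => [->|_] //; apply: ia_1. Qed.

Lemma left_mono j (a : S) (F : 'I_n -> S) : ia j a -> (forall i, ia i (F i)) ->
  a * \prod_(i < n) F i = \prod_(i < n) (if i == j then a * F i else F i).
Proof.
move=> ha hF.
rewrite -{1}(@prod_single (index_enum 'I_n) j a) ?index_enum_uniq ?mem_index_enum //.
rewrite prod_mul ?index_enum_uniq //; last by move=> i; apply: ia_if.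
by apply: eq_bigr => i _; case: eqP => _; rewrite ?mul1r.
Qed.

Lemma x_mono j g d : x j * mono g d = mono (up j g) d.
Proof.
rewrite /mono (left_mono (j := j)); [|exact: ia_x|by move=> i; apply: ia_xy].
apply: eq_bigr => i _; rewrite ffunE; case: eqP => [->|] //.
by rewrite mulrA -exprS.
Qed.

Lemma y_mono j g d : y j * mono g d =
  if (0 < g j)%N then mono (dn j g) d else mono g (up j d).
Proof.
rewrite /mono (left_mono (j := j)); [|exact: ia_y|by move=> i; apply: ia_xy].
case: (posnP (g j)) => hg.
  apply: eq_bigr => i _; rewrite ffunE; case: eqP => [->|] //.
  by rewrite hg expr0 !mul1r -exprS.
apply: eq_bigr => i _; rewrite ffunE; case: eqP => [->|] //.
rewrite mulrA; case: (g j) hg => // k _.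
by rewrite exprS mulrA yx mul1r.
Qed.

Definition Span (s : S) := exists l : seq (K * M n * M n), s = \sum_(q <- l) q.1.1 *: mono q.1.2 q.2.

Lemma Span_left (u : S) (hu : forall g d, Span (u * mono g d)) s : Span s -> Span (u * s).
Proof.
case=> l ->; elim: l => [|q l [l' IH]]; first by exists [::]; rewrite !big_nil mulr0.
have [l1 e1] := hu q.1.2 q.2.
exists ([seq (q.1.1 * q'.1.1, q'.1.2, q'.2) | q' <- l1] ++ l').
rewrite big_cons mulrDr IH big_cat /= big_map; congr (_ + _).
rewrite -scalerAr e1 scaler_sumr; apply: eq_bigr => q' _.
by rewrite scalerA.
Qed.

Lemma S_span s : Span s.
Proof.
suff h : forall u s, Span s -> Span (u * s).
  rewrite -[s]mulr1; apply: h; exists [:: (1, [ffun => 0%N], [ffun => 0%N])].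
  rewrite big_cons big_nil addr0 scale1r /mono big1 // => i _.
  by rewrite !ffunE !expr0 mulr1.
apply: (Sn_ind hS).
- by move=> w; rewrite mul1r.
- by move=> w _; exists [::]; rewrite mul0r big_nil.
- move=> u v hu hv w hs; have [l1 e1] := hu w hs; have [l2 e2] := hv w hs.
  by exists (l1 ++ l2); rewrite mulrDl e1 e2 big_cat.
- move=> k u hu w hs; have [l1 e1] := hu w hs.
  exists [seq (k * q.1.1, q.1.2, q.2) | q <- l1].
  rewrite -scalerAl e1 big_map scaler_sumr; apply: eq_bigr => q _.
  by rewrite scalerA.
- by move=> u v hu hv w hs; rewrite -mulrA; apply: hu; apply: hv.
- move=> i; apply: Span_left => g d; rewrite x_mono.
  by exists [:: (1, up i g, d)]; rewrite big_cons big_nil addr0 scale1r.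
- move=> i; apply: Span_left => g d; rewrite y_mono.
  by case: ifP => _; [exists [:: (1, dn i g, d)] | exists [:: (1, g, up i d)]];
     rewrite big_cons big_nil addr0 scale1r.
Qed.

Lemma P_neq0 : P != 0.
Proof.
have [_ hU] := hS.
have [f [fm fgen _]] := hU _ (@XE K n) (@YE K n) (model_rel K n).
apply/eqP => hP.
have := model_P_neq0 K n.
suff -> : \prod_(i < n) (1 - @XE K n i * @YE K n i) = f P :> Ety K n by rewrite hP am0 ?eqxx.
rewrite /P am_prod //; apply: eq_bigr => i _.
by rewrite /Pi amB // am1 // amM //; have [-> ->] := fgen i.
Qed.

Lemma scaleP_inj (c c' : K) : c *: P = c' *: P -> c = c'.
Proof.
move/eqP; rewrite -subr_eq0 -scalerBl scaler_eq0 (negbTE P_neq0) orbF subr_eq0.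
by move/eqP.
Qed.

Definition Fsum (l : seq (K * M n * M n)) := \sum_(q <- l) q.1.1 *: mono q.1.2 q.2.

Lemma compress_Fsum al be l :
  cu al * Fsum l * cv be = (\sum_(q <- l) q.1.1 * (cond al be q.1.2 q.2)%:R) *: P.
Proof.
rewrite /Fsum mulr_sumr mulr_suml scaler_suml; apply: eq_bigr => q _.
rewrite -scalerAr -scalerAl compress_mono -scalerA.
by case: cond; rewrite ?scale1r ?scale0r.
Qed.

Lemma compress_ex al be s : exists c : K, cu al * s * cv be == c *: P.
Proof. by have [l ->] := S_span s; eexists; rewrite compress_Fsum. Qed.

Definition lam al be s := xchoose (compress_ex al be s).
Lemma lamP al be s : cu al * s * cv be = lam al be s *: P.
Proof. exact/eqP/(xchooseP (compress_ex al be s)). Qed.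
Lemma lam_uniq al be s c : cu al * s * cv be = c *: P -> lam al be s = c.
Proof. by rewrite lamP => /scaleP_inj. Qed.
Lemma lam_lin al be k s s' : lam al be (k *: s + s') = k * lam al be s + lam al be s'.
Proof.
apply: lam_uniq.
by rewrite mulrDr mulrDl -scalerAr -scalerAl !lamP scalerDl scalerA.
Qed.
Lemma lam_Fsum al be l : lam al be (Fsum l) = \sum_(q <- l) q.1.1 * (cond al be q.1.2 q.2)%:R.
Proof. by apply: lam_uniq; rewrite compress_Fsum. Qed.

Lemma seq_min (T : eqType) (f : T -> nat) (l : seq T) :
  l != [::] -> exists2 q, q \in l & forall q', q' \in l -> (f q <= f q')%N.
Proof.
elim: l => [|a l IH] // _.
case: (eqVneq l [::]) => [->|hl].
  by exists a; rewrite ?inE // => q'; rewrite inE => /eqP ->.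
have [q hq hmin] := IH hl.
case: (leqP (f a) (f q)) => h.
  exists a; first by rewrite inE eqxx.
  move=> q'; rewrite inE => /orP [/eqP ->//|/hmin]; exact: leq_trans.
exists q; first by rewrite inE hq orbT.
move=> q'; rewrite inE => /orP [/eqP ->|/hmin //]; exact: ltnW.
Qed.

Lemma sum_le_eq (F G : 'I_n -> nat) : (forall i, F i <= G i)%N ->
  (\sum_(i < n) G i <= \sum_(i < n) F i)%N -> forall i, F i = G i.
Proof.
move=> hle hs.
have e : (\sum_(i < n) G i = \sum_(i < n) (G i - F i) + \sum_(i < n) F i)%N.
  by rewrite -big_split; apply: eq_bigr => i _ /=; rewrite subnK.
have : (\sum_(i < n) (G i - F i) == 0)%N.
  by rewrite -(eqn_add2r (\sum_(i < n) F i)) add0n -e eqn_leq hs /= e leq_addl.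
rewrite sum_nat_eq0 => /forallP h i.
by apply/eqP; rewrite eqn_leq hle /= -subn_eq0; exact: h.
Qed.

Definition wt (q : K * M n * M n) := (\sum_(i < n) (q.1.2 i + q.2 i))%N.

Lemma cond_refl al be : cond al be al be.
Proof. by apply/allP => i _; rewrite !leqnn !subnn. Qed.

Lemma cond_min al be (g d : M n) : cond al be g d ->
  (\sum_(i < n) (al i + be i) <= \sum_(i < n) (g i + d i))%N -> g = al /\ d = be.
Proof.
move=> /allP hc hw.
have hc' i : [&& (g i <= al i)%N, (d i <= be i)%N & (al i - g i == be i - d i)%N].
  by apply: hc; rewrite mem_index_enum.
have hle i : (g i + d i <= al i + be i)%N.
  by have /and3P [h1 h2 _] := hc' i; apply: leq_add.
have := sum_le_eq hle hw => heq.
split; apply/ffunP => i; have /and3P [/leP h1 /leP h2 /eqP h3] := hc' i; have h4 := heq i;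
  rewrite -?plusE -?minusE in h3 h4;
  move: (g i) (al i) (d i) (be i) h1 h2 h3 h4 => a1 b1 c1 e1 *; lia.
Qed.

Lemma Fsum_sep N l : (size l <= N)%N -> (forall al be, lam al be (Fsum l) = 0) -> Fsum l = 0.
Proof.
elim: N l => [|N IH] l.
  by rewrite leqn0 => /nilP ->; rewrite /Fsum big_nil.
move=> hsz hlam.
case: (eqVneq l [::]) => [->|hl]; first by rewrite /Fsum big_nil.
have [q0 hq0 hmin] := seq_min wt hl.
pose same (q : K * M n * M n) := (q.1.2 == q0.1.2) && (q.2 == q0.2).
have hcond q : q \in l -> cond q0.1.2 q0.2 q.1.2 q.2 = same q.
  move=> hq; apply/idP/idP.
    by move=> hc; rewrite /same; have [-> ->] := cond_min hc (hmin q hq); rewrite !eqxx.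
  by case/andP => /eqP -> /eqP ->; apply: cond_refl.
have hsame : \sum_(q <- l | same q) q.1.1 = 0.
  rewrite -[RHS](hlam q0.1.2 q0.2) lam_Fsum big_mkcond [LHS]big_seq [RHS]big_seq.
  apply: eq_bigr => q hq; rewrite hcond //.
  by case: (same q); rewrite ?mulr1 ?mulr0.
have split : Fsum l = Fsum [seq q <- l | ~~ same q].
  rewrite /Fsum (bigID same) /= big_filter.
  have -> : \sum_(q <- l | true && same q) q.1.1 *: mono q.1.2 q.2 =
            \sum_(q <- l | same q) q.1.1 *: mono q0.1.2 q0.2.
    by apply: eq_bigr => q; rewrite /= /same => /andP [/eqP -> /eqP ->].
  by rewrite -scaler_suml hsame scale0r add0r.
rewrite split; apply: IH.
  have hc : (0 < count same l)%N.
    by rewrite -has_count; apply/hasP; exists q0 => //; rewrite /same !eqxx.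
  rewrite size_filter; change (count (predC same) l <= N)%N.
  move: hc (count_predC same l) hsz; move: (count same l) (count (predC same) l) (size l).
  move=> a b c /leP h1 h2 /leP h3; apply/leP; rewrite -?plusE in h2; lia.
by move=> al be; rewrite -split.
Qed.

Lemma lam_sep s : (forall al be, lam al be s = 0) -> s = 0.
Proof. by have [l ->] := S_span s; apply: (@Fsum_sep (size l)). Qed.

Lemma lam_P : lam [ffun => 0%N] [ffun => 0%N] P = 1.
Proof.
apply: lam_uniq; rewrite scale1r /cu /cv.
have e1 : \prod_(i < n) (Pi i * y i ^+ [ffun => 0%N] i) = P.
  by apply: eq_bigr => i _; rewrite ffunE expr0 mulr1.
have e2 : \prod_(i < n) (x i ^+ [ffun => 0%N] i * Pi i) = P.
  by apply: eq_bigr => i _; rewrite ffunE expr0 mul1r.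
rewrite e1 e2 /P prod_mul ?index_enum_uniq //; try by move=> i; apply: ia_Pi.
rewrite prod_mul ?index_enum_uniq //; try by move=> i; apply: ia_Pi.
  by apply: eq_bigr => i _; rewrite !(Pone_idem (yx i)).
by move=> i; apply: ia_M; apply: ia_Pi.
Qed.
End SnTheory.

Lemma am_sum (K : fieldType) (A B : algType K) (f : A -> B) (hf : alg_morph f)
  (I : Type) (r : seq I) (F : I -> A) : f (\sum_(i <- r) F i) = \sum_(i <- r) f (F i).
Proof. elim: r => [|i r IH]; by rewrite ?big_nil ?am0 // !big_cons amD // IH. Qed.

Section Tensor.
Variable K : fieldType.
Variable n : nat.
Variables (A S T : algType K) (x y : 'I_n -> S) (hS : is_Sn x y).
Variables (iS : S -> T) (iA : A -> T) (hT : is_tensor_alg iS iA).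

Definition tt s a := iS s * iA a.
Lemma hiS : alg_morph iS. Proof. by case: hT. Qed.
Lemma hiA : alg_morph iA. Proof. by case: hT. Qed.
Lemma hcomm s a : iS s * iA a = iA a * iS s. Proof. by case: hT => _ _ h _; apply: h. Qed.

Lemma tt_mul s a s' a' : tt s a * tt s' a' = tt (s * s') (a * a').
Proof.
rewrite /tt (amM hiS) (amM hiA) -!mulrA; congr (_ * _).
by rewrite !mulrA hcomm.
Qed.
Lemma ttZl k s a : tt (k *: s) a = k *: tt s a.
Proof. by rewrite /tt (amZ hiS) scalerAl. Qed.
Lemma ttZr k s a : tt s (k *: a) = k *: tt s a.
Proof. by rewrite /tt (amZ hiA) scalerAr. Qed.
Lemma ttDl s s' a : tt (s + s') a = tt s a + tt s' a.
Proof. by rewrite /tt (amD hiS) mulrDl. Qed.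
Lemma ttDr s a a' : tt s (a + a') = tt s a + tt s a'.
Proof. by rewrite /tt (amD hiA) mulrDr. Qed.
Lemma ttBl s s' a : tt (s - s') a = tt s a - tt s' a.
Proof. by rewrite /tt (amB hiS) mulrBl. Qed.
Lemma tt0r s : tt s 0 = 0. Proof. by rewrite /tt (am0 hiA) mulr0. Qed.
Lemma tt0l a : tt 0 a = 0. Proof. by rewrite /tt (am0 hiS) mul0r. Qed.
Lemma tt_sumr (I : Type) (r : seq I) s (F : I -> A) : tt s (\sum_(i <- r) F i) = \sum_(i <- r) tt s (F i).
Proof. by rewrite /tt (am_sum hiA) mulr_sumr. Qed.
Lemma tt11 : tt 1 1 = 1. Proof. by rewrite /tt (am1 hiS) (am1 hiA) mulr1. Qed.

Definition TSum (l : seq (S * A)) := \sum_(q <- l) tt q.1 q.2.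

Lemma T_span t : exists l, t = TSum l.
Proof.
apply: (tensor_ind hT (Q := fun t => exists l, t = TSum l)).
- by exists [::]; rewrite /TSum big_nil.
- by move=> u v [l1 ->] [l2 ->]; exists (l1 ++ l2); rewrite /TSum big_cat.
- move=> k u [l ->]; exists [seq (k *: q.1, q.2) | q <- l].
  by rewrite /TSum big_map scaler_sumr; apply: eq_bigr => q _; rewrite ttZl.
- by move=> s a; exists [:: (s, a)]; rewrite /TSum big_cons big_nil addr0.
Qed.

Lemma Lam_ex al be : exists g : T -> A, [/\ klinear g,
   (forall s a, g (iS s * iA a) = lam hS al be s *: a) &
   forall g' : T -> A, klinear g' -> (forall s a, g' (iS s * iA a) = lam hS al be s *: a) ->
     forall t, g' t = g t].
Proof.
case: hT => _ _ _ hU; apply: hU; split.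
  by move=> a k u v; rewrite lam_lin scalerDl scalerA.
by move=> s k u v; rewrite scalerDr scalerA mulrC -scalerA.
Qed.
Definition Lam al be : T -> A := proj1_sig (constructive_indefinite_description _ (Lam_ex al be)).
Lemma LamP al be : [/\ klinear (Lam al be),
   (forall s a, Lam al be (iS s * iA a) = lam hS al be s *: a) &
   forall g' : T -> A, klinear g' -> (forall s a, g' (iS s * iA a) = lam hS al be s *: a) ->
     forall t, g' t = Lam al be t].
Proof. exact: (proj2_sig (constructive_indefinite_description _ (Lam_ex al be))). Qed.
Lemma Lam_lin al be k u v : Lam al be (k *: u + v) = k *: Lam al be u + Lam al be v.
Proof. by case: (LamP al be) => h _ _; apply: h. Qed.
Lemma Lam_tt al be s a : Lam al be (tt s a) = lam hS al be s *: a.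
Proof. by case: (LamP al be) => _ h _; apply: h. Qed.
Lemma Lam0 al be : Lam al be 0 = 0.
Proof.
have := Lam_lin al be 1 0 0; rewrite !scale1r !addr0 => /eqP.
by rewrite eq_sym -subr_eq0 addrK => /eqP.
Qed.
Lemma LamD al be u v : Lam al be (u + v) = Lam al be u + Lam al be v.
Proof. by rewrite -{1}[u]scale1r Lam_lin scale1r. Qed.
Lemma LamZ al be k u : Lam al be (k *: u) = k *: Lam al be u.
Proof. by rewrite -[k *: u]addr0 Lam_lin Lam0 addr0. Qed.
Lemma LamB al be u v : Lam al be (u - v) = Lam al be u - Lam al be v.
Proof. by rewrite -scaleN1r LamD LamZ scaleN1r. Qed.
Lemma Lam_TSum al be l : Lam al be (TSum l) = \sum_(q <- l) lam hS al be q.1 *: q.2.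
Proof.
elim: l => [|q l IH]; first by rewrite /TSum !big_nil Lam0.
by rewrite /TSum !big_cons LamD Lam_tt -IH.
Qed.

Lemma compress_T al be t : iS (cu x y al) * t * iS (cv x y be) = tt (P x y) (Lam al be t).
Proof.
have bf : bilinear_map (fun s a => iS (cu x y al * s * cv x y be) * iA a).
  split=> [a|s] k u v /=.
    by rewrite mulrDr mulrDl -scalerAr -scalerAl (amD hiS) (amZ hiS) mulrDl scalerAl.
  by rewrite (amD hiA) (amZ hiA) mulrDr scalerAr.
case: hT => _ _ _ hU; have [g [_ _ gu]] := hU T _ bf.
rewrite (gu (fun t => iS (cu x y al) * t * iS (cv x y be))); last first.
- by move=> s a; rewrite !(amM hiS) -!mulrA (hcomm (cv x y be) a).
- by move=> k u v; rewrite mulrDr mulrDl -scalerAr -scalerAl.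
rewrite (gu (fun t => tt (P x y) (Lam al be t))) //.
- by move=> k u v; rewrite Lam_lin ttDr ttZr.
move=> s a; rewrite Lam_tt ttZr (lamP hS al be s) /tt.
by rewrite (amZ hiS) scalerAl.
Qed.

Lemma P_idem : P x y * P x y = P x y.
Proof.
rewrite /P (prod_mul hS) ?index_enum_uniq //; try by move=> i; apply: ia_Pi.
by apply: eq_bigr => i _; rewrite (Pone_idem (yx hS i)).
Qed.

Section Ideals.
Variable p : A -> Prop.
Hypothesis hp : is_ideal p.
Lemma ip0 : p 0. Proof. by case: hp. Qed.
Lemma ipD a b : p a -> p b -> p (a + b). Proof. by case: hp => _ h _; apply: h. Qed.
Lemma ipMl r a : p a -> p (r * a). Proof. by case: hp => _ _ h ha; case: (h r a ha). Qed.
Lemma ipMr r a : p a -> p (a * r). Proof. by case: hp => _ _ h ha; case: (h r a ha). Qed.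
Lemma ipN a : p a -> p (- a). Proof. by move=> h; rewrite -mulN1r; apply: ipMl. Qed.
Lemma ipB a b : p a -> p b -> p (a - b). Proof. by move=> ha hb; apply: ipD => //; apply: ipN. Qed.
Lemma ipZ k a : p a -> p (k *: a). Proof. by move=> h; rewrite -[a]mul1r scalerAl; apply: ipMl. Qed.
Lemma ip_sum (I : eqType) (r : seq I) (F : I -> A) : (forall i, i \in r -> p (F i)) -> p (\sum_(i <- r) F i).
Proof.
elim: r => [|i r IH] h; first by rewrite big_nil; exact: ip0.
rewrite big_cons; apply: ipD; first by apply: h; rewrite inE eqxx.
by apply: IH => j hj; apply: h; rewrite inE hj orbT.
Qed.
End Ideals.

Definition W (p : A -> Prop) := tensor_ideal iS iA p.

Lemma W0 p : W p 0. Proof. by exists [::]; rewrite big_nil. Qed.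
Lemma WD p u v : W p u -> W p v -> W p (u + v).
Proof.
case=> [l1 [h1 ->]] [l2 [h2 ->]]; exists (l1 ++ l2); rewrite big_cat; split => //.
by move=> q; rewrite mem_cat => /orP [/h1|/h2].
Qed.
Lemma Wtt (p : A -> Prop) s a : p a -> W p (tt s a).
Proof. by move=> h; exists [:: (s, a)]; rewrite big_cons big_nil addr0; split => // q; rewrite inE => /eqP ->. Qed.
Lemma W_sum p (I : eqType) (r : seq I) (F : I -> T) : (forall i, i \in r -> W p (F i)) -> W p (\sum_(i <- r) F i).
Proof.
elim: r => [|i r IH] h; first by rewrite big_nil; exact: W0.
rewrite big_cons; apply: WD; first by apply: h; rewrite inE eqxx.
by apply: IH => j hj; apply: h; rewrite inE hj orbT.
Qed.
Lemma W_all t : W (fun _ => True) t.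
Proof. by have [l ->] := T_span t; exists l. Qed.

Lemma W_mul (p1 p2 p3 : A -> Prop) (h : forall a b, p1 a -> p2 b -> p3 (a * b)) u v :
  W p1 u -> W p2 v -> W p3 (u * v).
Proof.
case=> [l1 [h1 ->]] [l2 [h2 ->]].
rewrite mulr_suml; apply: W_sum => q hq; rewrite mulr_sumr; apply: W_sum => q' hq'.
by rewrite -/(tt q.1 q.2) -/(tt q'.1 q'.2) tt_mul; apply: Wtt; apply: h; [apply: h1 | apply: h2].
Qed.

Lemma W_ideal p : is_ideal p -> is_ideal (W p).
Proof.
move=> hp; split; [exact: W0 | exact: WD |] => r a ha; split.
  by apply: (W_mul (p1 := fun _ => True)) (W_all r) ha => a' b _ hb; apply: ipMl.
by apply: (W_mul (p2 := fun _ => True)) ha (W_all r) => a' b ha' _; apply: ipMr.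
Qed.

Lemma W_Lam p : is_ideal p -> forall t, W p t -> forall al be, p (Lam al be t).
Proof.
move=> hp t [l [hl ->]] al be; rewrite -/(TSum l) Lam_TSum.
by apply: ip_sum => // q hq; apply: ipZ => //; apply: hl.
Qed.

Lemma detect p : is_ideal p -> forall t, (forall al be, p (Lam al be t)) -> W p t.
Proof.
move=> hp t; have [l ->] := T_span t.
elim: {l}(size l) {-2}l (leqnn (size l)) => [|N IH] l.
  by rewrite leqn0 => /nilP -> _; rewrite /TSum big_nil; apply: W0.
case: l => [|[s a] l] hsz hL; first by rewrite /TSum big_nil; apply: W0.
have {}hsz : (size l <= N)%N by [].
case: (eqVneq s 0) => [s0|sn0].
  have e : TSum ((s, a) :: l) = TSum l by rewrite /TSum big_cons /= s0 tt0l add0r.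
  by rewrite e; apply: IH => // al be; rewrite -e.
have [al [be hc]] : exists al be, lam hS al be s != 0.
  apply: NNPP => hn; apply: (negP sn0); apply/eqP; apply: (@lam_sep _ _ _ _ _ hS) => al be.
  by apply/eqP; apply: negbNE; apply/negP => hne; apply: hn; exists al, be.
set c := lam hS al be s in hc.
set t0 := TSum ((s, a) :: l).
pose b := c^-1 *: Lam al be t0.
pose l2 := [seq (q.1 - (c^-1 * lam hS al be q.1) *: s, q.2) | q <- l].
have hb : p b by apply: ipZ => //; apply: hL.
have et : t0 = tt s b + TSum l2.
  rewrite /t0 /b Lam_TSum /TSum big_cons /= big_map big_cons /= -/c ttZr ttDr ttZr scalerDr scalerA mulVf // scale1r.
  rewrite tt_sumr scaler_sumr -addrA; congr (_ + _).
  rewrite -big_split /=; apply: eq_bigr => q _.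
  by rewrite ttBl ttZl ttZr scalerA addrC subrK.
rewrite et; apply: WD; first exact: Wtt.
apply: IH; first by rewrite size_map.
move=> al' be'; have -> : TSum l2 = t0 - tt s b by rewrite et addrC addKr.
by rewrite LamB Lam_tt; apply: ipB => //; apply: ipZ.
Qed.

Definition z0 : M n := [ffun => 0%N].

Lemma W_ttP p : is_ideal p -> forall a, W p (tt (P x y) a) -> p a.
Proof.
move=> hp a /(W_Lam hp) /(_ z0 z0).
by rewrite Lam_tt /z0 (lam_P hS) scale1r.
Qed.

Lemma prime_fwd p : is_ideal p -> prime_ideal p -> prime_ideal (W p).
Proof.
move=> hp [_ hprop hprime]; split; first exact: W_ideal.
  move=> hall; apply: hprop => r.
  have := W_ttP hp (hall (tt (P x y) 1)) => h1.
  by rewrite -[r]mulr1; apply: ipMl.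
move=> I J hI hJ hIJ.
case: (classic (Defs.subpred I (W p))) => hIW; first by left.
case: (classic (Defs.subpred J (W p))) => hJW; first by right.
exfalso.
have [t1 [ht1 nt1]] : exists t, I t /\ ~ W p t.
  apply: NNPP => hn; apply: hIW => t ht; apply: NNPP => hw; apply: hn; by exists t.
have [t2 [ht2 nt2]] : exists t, J t /\ ~ W p t.
  apply: NNPP => hn; apply: hJW => t ht; apply: NNPP => hw; apply: hn; by exists t.
have [al1 [be1 na1]] : exists al be, ~ p (Lam al be t1).
  apply: NNPP => hn; apply: nt1; apply: detect => // al be; apply: NNPP => hq; apply: hn; by exists al, be.
have [al2 [be2 na2]] : exists al be, ~ p (Lam al be t2).
  apply: NNPP => hn; apply: nt2; apply: detect => // al be; apply: NNPP => hq; apply: hn; by exists al, be.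
have idl (L : T -> Prop) : is_ideal L -> is_ideal (fun a => L (tt (P x y) a)).
  move=> [L0 LD LM]; split.
  - by rewrite tt0r.
  - by move=> a b ha hb; rewrite ttDr; apply: LD.
  - move=> r a ha; split.
      by rewrite -P_idem -tt_mul; apply: (LM _ _ ha).1.
    by rewrite -P_idem -tt_mul; apply: (LM _ _ ha).2.
have inI : I (tt (P x y) (Lam al1 be1 t1)).
  by rewrite -compress_T; case: hI => _ _ hM; apply: (hM _ _ (hM _ _ ht1).1).2.
have inJ : J (tt (P x y) (Lam al2 be2 t2)).
  by rewrite -compress_T; case: hJ => _ _ hM; apply: (hM _ _ (hM _ _ ht2).1).2.
have hprod : Defs.subpred (ideal_prod (fun a => I (tt (P x y) a)) (fun a => J (tt (P x y) a))) p.
  move=> r [s [hs ->]]; apply: (W_ttP hp); apply: hIJ.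
  exists [seq (tt (P x y) q.1, tt (P x y) q.2) | q <- s]; split.
    by move=> q /mapP [q' hq' ->] /=; apply: hs.
  by rewrite big_map tt_sumr; apply: eq_bigr => q _ /=; rewrite tt_mul P_idem.
case: (hprime _ _ (idl _ hI) (idl _ hJ) hprod) => h.
  by apply: na1; apply: h.
by apply: na2; apply: h.
Qed.

Lemma prime_bwd p : is_ideal p -> prime_ideal (W p) -> prime_ideal p.
Proof.
move=> hp [hW hprop hprime]; split => //.
  move=> hall; apply: hprop => t; rewrite -[t]mulr1 -tt11.
  by case: hW => _ _ hM; apply: (hM _ _ (Wtt 1 (hall 1))).1.
move=> I J hI hJ hIJ.
have hprod : Defs.subpred (ideal_prod (W I) (W J)) (W p).
  move=> t [s [hs ->]]; apply: W_sum => q hq; have [h1 h2] := hs q hq.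
  apply: (W_mul _ h1 h2) => a b ha hb; apply: hIJ.
  by exists [:: (a, b)]; rewrite big_cons big_nil addr0; split => // q'; rewrite inE => /eqP ->.
case: (hprime _ _ (W_ideal hI) (W_ideal hJ) hprod) => h; [left | right] => a ha;
  by apply: (W_ttP hp); apply: h; apply: Wtt.
Qed.
End Tensor.

Unset Implicit Arguments.

Theorem proposition4p3 (K : fieldType) (A : algType K) (n : nat) (hn : (1 <= n)%N)
    (S : algType K) (x y : 'I_n -> S) (hS : is_Sn x y)
    (T : algType K) (iS : S -> T) (iA : A -> T) (hT : is_tensor_alg iS iA) :
  (prime_ring T <-> prime_ring A) /\
  (forall p : A -> Prop, is_ideal p ->
     (prime_ideal p <-> prime_ideal (tensor_ideal iS iA p))).
Proof.
have part2 : forall p : A -> Prop, is_ideal p ->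
     (prime_ideal p <-> prime_ideal (tensor_ideal iS iA p)).
  move=> p hp; split; [exact: (prime_fwd hS hT hp) | exact: (prime_bwd hS hT hp)].
split=> //.
have hz : is_ideal (fun a : A => a = 0).
  split=> // [a b -> ->|r a ->]; by rewrite ?addr0 ?mulr0 ?mul0r.
have e : tensor_ideal iS iA (fun a : A => a = 0) = (fun t : T => t = 0).
  apply: functional_extensionality => t; apply: propositional_extensionality; split.
    case=> l [hl ->]; rewrite big_seq big1 // => q hq.
    by rewrite (hl q hq) (am0 (hiA hT)) mulr0.
  by move=> ->; exists [::]; rewrite big_nil.
by rewrite /prime_ring -e; split => h; apply/part2.
Qed.
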